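(* Let $\mathbb{T}$ be a time scale, $a,b\in\mathbb{T}$ with $a<b$, $B\in\mathbb{R}$, and let $\varphi:\mathbb{R}\to\mathbb{R}$ be positive and continuous. For $\alpha\in\mathbb{R}\setminus\{0,1\}$ consider the functional $$\mathcal{F}(y)=\int_a^b \left[\left\{\int_0^1\varphi\big(y(t)+h\mu(t)y^\Delta(t)\big)\,dh\right\} y^\Delta(t)\right]^\alpha\Delta t,$$ defined on all $C^1_{\mathrm{rd}}$-functions $y:[a,b]_{\mathbb{T}}\to\mathbb{R}$ satisfying $y^\Delta(t)>0$ on $[a,b]^\kappa_{\mathbb{T}}$, $y(a)=0$ and $y(b)=B$. Let $G(x)=\int_0^x\varphi(s)\,ds$ for $x\geq 0$, let $G^{-1}$ be its inverse, and let $C=\frac{\int_0^B\varphi(s)\,ds}{b-a}$. (i) If $\alpha<0$ or $\alpha>1$, then the minimum of $\mathcal{F}$ is attained at $y(t)=G^{-1}(C(t-a))$, $t\in[a,b]_{\mathbb{T}}$, and $\mathcal{F}_{\min}=(b-a)C^\alpha$. (ii) If $0<\alpha<1$, then the maximum of $\mathcal{F}$ is attained at $y(t)=G^{-1}(C(t-a))$, $t\in[a,b]_{\mathbb{T}}$, and $\mathcal{F}_{\max}=(b-a)C^\alpha$.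
   Context: A time scale $\mathbb{T}$ is a nonempty closed subset of $\mathbb{R}$; $[a,b]_{\mathbb{T}}=[a,b]\cap\mathbb{T}$. $\sigma(t)=\inf\{s\in\mathbb{T}:s>t\}$ is the forward jump operator and $\mu(t)=\sigma(t)-t$ the graininess. $[a,b]^\kappa_{\mathbb{T}}$ equals $[a,b]_{\mathbb{T}}$ with $b$ removed if $b$ is left-scattered, and $[a,b]_{\mathbb{T}}$ otherwise. $y^\Delta$ denotes the delta (Hilger) derivative: $y^\Delta(t)=\lim_{s\to t,\,s\in\mathbb{T}}\frac{y(\sigma(t))-y(s)}{\sigma(t)-s}$ (so $y^\Delta=y'$ on $\mathbb{R}$ and $y^\Delta(t)=y(t+1)-y(t)$ on $\mathbb{Z}$). $C^1_{\mathrm{rd}}$ denotes functions that are delta differentiable on $[a,b]^\kappa_{\mathbb{T}}$ with rd-continuous delta derivative (rd-continuous: continuous at right-dense points, finite left limits at left-dense points). $\int_a^b\cdot\,\Delta t$ is the delta integral. *)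

(* Defs.v *)
From Stdlib Require Import Reals Lra ClassicalEpsilon.
From Coquelicot Require Import Coquelicot.
Open Scope R_scope.

Definition tsI (T : R -> Prop) (a b : R) (t : R) : Prop := T t /\ a <= t <= b.

(** Forward / backward jump operators of a set S of reals
    (conventions: inf empty = t, sup empty = t, i.e. sigma(max S) = max S). *)
Definition sigma (S : R -> Prop) (t : R) : R :=
  match Glb_Rbar (fun s => S s /\ t < s) with Finite r => r | _ => t end.
Definition rho (S : R -> Prop) (t : R) : R :=
  match Lub_Rbar (fun s => S s /\ s < t) with Finite r => r | _ => t end.
Definition mu (S : R -> Prop) (t : R) : R := sigma S t - t.

(** [a,b]^kappa_T : remove b if b is left-scattered. *)
Definition kappa (T : R -> Prop) (a b : R) (t : R) : Prop :=
  tsI T a b t /\ (t < b \/ rho (tsI T a b) b = b).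

Definition is_delta_deriv (S : R -> Prop) (y : R -> R) (t f : R) : Prop :=
  forall eps : R, 0 < eps -> exists delta : R, 0 < delta /\
    forall s : R, S s -> Rabs (s - t) < delta ->
      Rabs (y (sigma S t) - y s - f * (sigma S t - s)) <= eps * Rabs (sigma S t - s).

Definition rd_continuous (S D : R -> Prop) (a b : R) (f : R -> R) : Prop :=
  forall t : R, D t ->
    ((t < b /\ sigma S t = t) ->
       forall eps, 0 < eps -> exists delta, 0 < delta /\
         forall s, D s -> Rabs (s - t) < delta -> Rabs (f s - f t) < eps) /\
    ((a < t /\ rho S t = t) ->
       exists L : R, forall eps, 0 < eps -> exists delta, 0 < delta /\
         forall s, D s -> t - delta < s < t -> Rabs (f s - L) < eps).

(** Delta integral over [a,b]_T via a delta antiderivative (Bohner-Peterson Def. 1.71):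
    v = int_a^b f(t) Delta t iff v = F b - F a for some F with F^Delta = f on [a,b]^kappa_T. *)
Definition is_delta_integral (T : R -> Prop) (a b : R) (f : R -> R) (v : R) : Prop :=
  exists F : R -> R,
    (forall t, kappa T a b t -> is_delta_deriv (tsI T a b) F t (f t)) /\
    v = F b - F a.

Definition admissible (T : R -> Prop) (a b B : R) (y yd : R -> R) : Prop :=
  (forall t, kappa T a b t -> is_delta_deriv (tsI T a b) y t (yd t)) /\
  rd_continuous (tsI T a b) (kappa T a b) a b yd /\
  (forall t, kappa T a b t -> 0 < yd t) /\
  y a = 0 /\ y b = B.

Definition integrand (T : R -> Prop) (a b alpha : R) (phi : R -> R) (y yd : R -> R)
  (t : R) : R :=
  Rpower (RInt (fun h => phi (y t + h * mu (tsI T a b) t * yd t)) 0 1 * yd t) alpha.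

Definition functional_value (T : R -> Prop) (a b alpha : R) (phi : R -> R)
  (y yd : R -> R) (v : R) : Prop :=
  is_delta_integral T a b (integrand T a b alpha phi y yd) v.

Definition G (phi : R -> R) (x : R) : R := RInt phi 0 x.
Definition Ginv (phi : R -> R) (x : R) : R :=
  epsilon (inhabits 0) (fun y => 0 <= y /\ G phi y = x).

(* Main.v *)
From Pilot Require Import Defs.
From Stdlib Require Import Reals.
From Coquelicot Require Import Coquelicot.
From Stdlib Require Import Lra Classical ClassicalEpsilon.
Import Pilot.Defs.
Open Scope R_scope.

Lemma glb_fin (E : R -> Prop) x0 l : E x0 -> is_lb_Rbar E (Finite l) ->
  exists r, Glb_Rbar E = Finite r /\ l <= r /\ r <= x0.
Proof.
  intros Hx Hl. destruct (Glb_Rbar_correct E) as [Hlb Hg].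
  destruct (Glb_Rbar E) as [r| |] eqn:Hr.
  - exists r; split; auto. split.
    + specialize (Hg _ Hl). simpl in Hg. exact Hg.
    + specialize (Hlb _ Hx). simpl in Hlb. exact Hlb.
  - specialize (Hlb _ Hx). simpl in Hlb. contradiction.
  - specialize (Hg _ Hl). simpl in Hg. contradiction.
Qed.

Lemma lub_fin (E : R -> Prop) x0 l : E x0 -> is_ub_Rbar E (Finite l) ->
  exists r, Lub_Rbar E = Finite r /\ r <= l /\ x0 <= r.
Proof.
  intros Hx Hl. destruct (Lub_Rbar_correct E) as [Hub Hg].
  destruct (Lub_Rbar E) as [r| |] eqn:Hr.
  - exists r; split; auto. split.
    + specialize (Hg _ Hl). simpl in Hg. exact Hg.
    + specialize (Hub _ Hx). simpl in Hub. exact Hub.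
  - specialize (Hg _ Hl). simpl in Hg. contradiction.
  - specialize (Hub _ Hx). simpl in Hub. contradiction.
Qed.

Lemma sig_ge (S : R -> Prop) (t : R) : t <= sigma S t.
Proof.
  unfold sigma. destruct (Glb_Rbar_correct (fun s => S s /\ t < s)) as [Hlb Hg].
  destruct (Glb_Rbar _) as [r| |] eqn:Hr; try lra.
  assert (H : Rbar_le (Finite t) (Finite r)).
  { apply Hg. intros x [_ Hx]. simpl. lra. }
  simpl in H. exact H.
Qed.

Lemma sig_le (S : R -> Prop) (t : R) s : S s -> t < s -> sigma S t <= s.
Proof.
  intros Hs Hts. unfold sigma. destruct (Glb_Rbar_correct (fun s => S s /\ t < s)) as [Hlb Hg].
  destruct (Glb_Rbar _) as [r| |] eqn:Hr; try lra.
  specialize (Hlb s (conj Hs Hts)). simpl in Hlb. exact Hlb.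
Qed.

Lemma sig_empty (S : R -> Prop) (t : R) : (forall s, S s -> t < s -> False) -> sigma S t = t.
Proof.
  intros H. unfold sigma.
  rewrite (is_glb_Rbar_unique _ p_infty); auto.
  split.
  - intros x [Hx1 Hx2]. exfalso. eapply H; eauto.
  - intros b _. destruct b; simpl; auto.
Qed.

Lemma sig_dense (S : R -> Prop) (t : R) : sigma S t = t -> forall s0, S s0 -> t < s0 ->
  forall e, 0 < e -> exists p, S p /\ t < p < t + e.
Proof.
  intros Hs s0 Hs0 Hts e He.
  destruct (glb_fin (fun s => S s /\ t < s) s0 t) as [r [Hr [H1 H2]]].
  { split; auto. }
  { intros x [_ Hx]. simpl. lra. }
  unfold sigma in Hs. rewrite Hr in Hs. subst r.
  destruct (classic (exists p, S p /\ t < p < t + e)) as [Hp|Hp]; auto.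
  exfalso.
  destruct (Glb_Rbar_correct (fun s => S s /\ t < s)) as [Hlb Hg].
  assert (Hle : Rbar_le (Finite (t + e)) (Glb_Rbar (fun s => S s /\ t < s))).
  { apply Hg. intros x [Sx Hx]. simpl.
    destruct (Rlt_or_le x (t + e)); [|lra]. exfalso; apply Hp; exists x; auto. }
  rewrite Hr in Hle. simpl in Hle. lra.
Qed.

Lemma sig_eq (S : R -> Prop) (t : R) x : S x -> t < x -> (forall s, S s -> t < s -> x <= s) -> sigma S t = x.
Proof.
  intros Sx Hx H. unfold sigma.
  rewrite (is_glb_Rbar_unique _ (Finite x)); auto.
  split.
  - intros y [Sy Hy]. simpl. auto.
  - intros b Hb. apply (Hb x). split; auto.
Qed.

Lemma closed_lim (T : R -> Prop) z : closed T ->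
  (forall e, 0 < e -> exists x, T x /\ Rabs (x - z) < e) -> T z.
Proof.
  intros HT Hz. apply HT. intros [eps Heps].
  destruct (Hz eps (cond_pos eps)) as [x [Tx Hx]].
  apply (Heps x); [| exact Tx].
  change (Rabs (x - z) < eps). exact Hx.
Qed.


Lemma dd_exact (S : R -> Prop) y t f : S t -> is_delta_deriv S y t f ->
  y (sigma S t) - y t = f * (sigma S t - t).
Proof.
  intros St H.
  set (d := Rabs (y (sigma S t) - y t - f * (sigma S t - t))).
  destruct (Req_dec d 0) as [Hd|Hd].
  { unfold d in Hd. apply Rabs_eq_0 in Hd. lra. }
  assert (Hdp : 0 < d) by (pose proof (Rabs_pos (y (sigma S t) - y t - f * (sigma S t - t))); fold d in H0; lra).
  set (m := Rabs (sigma S t - t)).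
  assert (Hm : 0 <= m) by apply Rabs_pos.
  destruct (H (d / (2 * (m + 1)))) as [del [Hdel Hs]].
  { apply Rdiv_lt_0_compat; lra. }
  specialize (Hs t St). rewrite Rminus_diag, Rabs_R0 in Hs. specialize (Hs Hdel).
  fold d m in Hs.
  assert (d / (2 * (m + 1)) * m < d).
  { apply Rmult_lt_reg_r with (2 * (m + 1)). lra.
    replace (d / (2 * (m + 1)) * m * (2 * (m + 1))) with (d * m) by (field; lra).
    nra. }
  lra.
Qed.

Lemma dd_cont (S : R -> Prop) y t f : S t -> is_delta_deriv S y t f ->
  forall e, 0 < e -> exists d, 0 < d /\ forall s, S s -> Rabs (s - t) < d -> Rabs (y s - y t) < e.
Proof.
  intros St H e He.
  pose proof (dd_exact S y t f St H) as E1.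
  pose proof (sig_ge S t) as Hsg.
  set (m := sigma S t - t) in *.
  assert (Hm : 0 <= m) by (unfold m; lra).
  set (ep := e / (2 * (m + 1))).
  assert (Hep : 0 < ep) by (apply Rdiv_lt_0_compat; lra).
  assert (Hep2 : ep * (m + 1) = e / 2) by (unfold ep; field; lra).
  destruct (H ep Hep) as [del [Hdel Hs]].
  set (k := e / (2 * (Rabs f + 1))).
  assert (Hk : 0 < k) by (apply Rdiv_lt_0_compat; pose proof (Rabs_pos f); lra).
  assert (Hk2 : Rabs f * k < e / 2).
  { unfold k. pose proof (Rabs_pos f).
    apply Rmult_lt_reg_r with (2 * (Rabs f + 1)). lra.
    replace (Rabs f * (e / (2 * (Rabs f + 1))) * (2 * (Rabs f + 1))) with (Rabs f * e) by (field; lra).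
    nra. }
  exists (Rmin del (Rmin 1 k)). split.
  { apply Rmin_pos; auto. apply Rmin_pos; lra. }
  intros s Ss Hst.
  assert (H1 : Rabs (s - t) < del) by (eapply Rlt_le_trans; [exact Hst| apply Rmin_l]).
  assert (H2 : Rabs (s - t) < 1) by (eapply Rlt_le_trans; [exact Hst| eapply Rle_trans; [apply Rmin_r| apply Rmin_l]]).
  assert (H3 : Rabs (s - t) < k) by (eapply Rlt_le_trans; [exact Hst| eapply Rle_trans; [apply Rmin_r| apply Rmin_r]]).
  specialize (Hs s Ss H1).
  replace (y (sigma S t) - y s - f * (sigma S t - s)) with (y t - y s + f * (s - t)) in Hs.
  2:{ replace (y (sigma S t)) with (y t + f * m) by lra. unfold m. ring. }
  assert (Hsig : Rabs (sigma S t - s) <= m + 1).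
  { replace (sigma S t - s) with (m - (s - t)) by (unfold m; ring).
    eapply Rle_trans. apply Rabs_triang. rewrite Rabs_Ropp, Rabs_right by lra. lra. }
  assert (Hf : Rabs (f * (s - t)) < e / 2).
  { rewrite Rabs_mult. pose proof (Rabs_pos f). pose proof (Rabs_pos (s - t)). nra. }
  replace (y s - y t) with (f * (s - t) - (y t - y s + f * (s - t))) by ring.
  eapply Rle_lt_trans. apply Rabs_triang. rewrite Rabs_Ropp.
  assert (ep * Rabs (sigma S t - s) <= e / 2) by nra.
  lra.
Qed.

Lemma dd_plus (S : R -> Prop) y z t f g : is_delta_deriv S y t f -> is_delta_deriv S z t g ->
  is_delta_deriv S (fun x => y x + z x) t (f + g).
Proof.
  intros Hy Hz eps He.
  destruct (Hy (eps/2)) as [d1 [Hd1 H1]]; [lra|].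
  destruct (Hz (eps/2)) as [d2 [Hd2 H2]]; [lra|].
  exists (Rmin d1 d2). split; [apply Rmin_pos; auto|].
  intros s Ss Hs.
  specialize (H1 s Ss (Rlt_le_trans _ _ _ Hs (Rmin_l _ _))).
  specialize (H2 s Ss (Rlt_le_trans _ _ _ Hs (Rmin_r _ _))).
  replace (y (sigma S t) + z (sigma S t) - (y s + z s) - (f + g) * (sigma S t - s))
    with ((y (sigma S t) - y s - f * (sigma S t - s)) + (z (sigma S t) - z s - g * (sigma S t - s))) by ring.
  eapply Rle_trans. apply Rabs_triang. lra.
Qed.

Lemma dd_scal (S : R -> Prop) y t f c : is_delta_deriv S y t f ->
  is_delta_deriv S (fun x => c * y x) t (c * f).
Proof.
  intros Hy eps He.
  pose proof (Rabs_pos c).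
  destruct (Hy (eps / (Rabs c + 1))) as [d1 [Hd1 H1]].
  { apply Rdiv_lt_0_compat; lra. }
  exists d1. split; auto. intros s Ss Hs. specialize (H1 s Ss Hs).
  replace (c * y (sigma S t) - c * y s - c * f * (sigma S t - s))
    with (c * (y (sigma S t) - y s - f * (sigma S t - s))) by ring.
  rewrite Rabs_mult.
  assert (Hq : Rabs c * (eps / (Rabs c + 1)) <= eps).
  { apply Rmult_le_reg_r with (Rabs c + 1). lra.
    replace (Rabs c * (eps / (Rabs c + 1)) * (Rabs c + 1)) with (Rabs c * eps) by (field; lra).
    nra. }
  pose proof (Rabs_pos (sigma S t - s)).
  pose proof (Rabs_pos (y (sigma S t) - y s - f * (sigma S t - s))).
  assert (Rabs c * Rabs (y (sigma S t) - y s - f * (sigma S t - s)) <= Rabs c * (eps / (Rabs c + 1) * Rabs (sigma S t - s))) by nra.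
  nra.
Qed.

Lemma dd_lin (S : R -> Prop) t c : is_delta_deriv S (fun x => c * x) t c.
Proof.
  intros eps He. exists 1. split; [lra|]. intros s _ _.
  replace (c * sigma S t - c * s - c * (sigma S t - s)) with 0 by ring.
  rewrite Rabs_R0. pose proof (Rabs_pos (sigma S t - s)). nra.
Qed.


Lemma abs_le (z k : R) : Rabs z <= k -> - k <= z /\ z <= k.
Proof. unfold Rabs; destruct (Rcase_abs z); intros; lra. Qed.
Lemma abs_lt (z k : R) : Rabs z < k -> - k < z /\ z < k.
Proof. unfold Rabs; destruct (Rcase_abs z); intros; lra. Qed.
Lemma abs_lt_intro (z k : R) : - k < z -> z < k -> Rabs z < k.
Proof. unfold Rabs; destruct (Rcase_abs z); intros; lra. Qed.

Lemma mono_claim (T : R -> Prop) a b H : closed T -> T a -> T b -> a < b ->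
  (forall t, kappa T a b t -> exists f, is_delta_deriv (tsI T a b) H t f /\ 0 <= f) ->
  forall eps, 0 < eps -> forall t, tsI T a b t -> H a - eps * (t - a) <= H t.
Proof.
  intros HT Ta Tb Hab HD eps Heps t0 St0.
  destruct (Rle_or_lt (H a - eps * (t0 - a)) (H t0)) as [ok|Hbad]; [exact ok|].
  exfalso.
  set (A := fun x => tsI T a b x /\ H x < H a - eps * (x - a)).
  destruct (glb_fin A t0 a) as [s0 [Hs0 [Has0 Hs0t]]].
  { split; auto. }
  { intros x [[_ Hx] _]. simpl. lra. }
  assert (P1 : forall x, A x -> s0 <= x).
  { intros x Ax. destruct (Glb_Rbar_correct A) as [Hlb _]. rewrite Hs0 in Hlb.
    exact (Hlb x Ax). }
  assert (P2 : forall e, 0 < e -> exists x, A x /\ x < s0 + e).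
  { intros e He. destruct (classic (exists x, A x /\ x < s0 + e)) as [Hp|Hp]; auto.
    exfalso. destruct (Glb_Rbar_correct A) as [_ Hg].
    assert (Hle : Rbar_le (Finite (s0 + e)) (Glb_Rbar A)).
    { apply Hg. intros x Ax. simpl.
      destruct (Rlt_or_le x (s0 + e)); [|lra]. exfalso; apply Hp; exists x; auto. }
    rewrite Hs0 in Hle. simpl in Hle. lra. }
  destruct St0 as [Tt0 [Ht0a Ht0b]].
  assert (Ss0 : tsI T a b s0).
  { split; [|lra]. apply closed_lim; auto. intros e He.
    destruct (P2 e He) as [x [Ax Hx]]. exists x. split; [apply Ax|].
    specialize (P1 x Ax). apply abs_lt_intro; lra. }
  destruct (classic (A s0)) as [As0|nAs0].
  -
    assert (Has : a < s0).
    { destruct (Rlt_or_le a s0); auto. assert (s0 = a) by lra. subst s0.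
      destruct As0 as [_ Hx]. lra. }
    set (L := fun u => tsI T a b u /\ u < s0).
    destruct (lub_fin L a s0) as [r [Hr [Hrs0 Har]]].
    { split; [split; [auto| lra]| auto]. }
    { intros x [_ Hx]. simpl. lra. }
    assert (Q1 : forall u, L u -> u <= r).
    { intros u Lu. destruct (Lub_Rbar_correct L) as [Hub _]. rewrite Hr in Hub.
      exact (Hub u Lu). }
    assert (Q2 : forall e, 0 < e -> exists u, L u /\ r - e < u).
    { intros e He. destruct (classic (exists u, L u /\ r - e < u)) as [Hp|Hp]; auto.
      exfalso. destruct (Lub_Rbar_correct L) as [_ Hg].
      assert (Hle : Rbar_le (Lub_Rbar L) (Finite (r - e))).
      { apply Hg. intros x Lx. simpl.
        destruct (Rlt_or_le (r - e) x); [|lra]. exfalso; apply Hp; exists x; auto. }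
      rewrite Hr in Hle. simpl in Hle. lra. }
    assert (Sr : tsI T a b r).
    { split; [|lra]. apply closed_lim; auto. intros e He.
      destruct (Q2 e He) as [u [Lu Hu]]. exists u. split; [apply Lu|].
      specialize (Q1 u Lu). apply abs_lt_intro; lra. }
    destruct (Rlt_or_le r s0) as [Hrl|Hrg].
    + (* left scattered *)
      assert (nAr : ~ A r) by (intros Ar; specialize (P1 r Ar); lra).
      assert (Hr1 : H a - eps * (r - a) <= H r).
      { destruct (Rle_or_lt (H a - eps * (r - a)) (H r)); auto. exfalso; apply nAr; split; auto. }
      assert (Kr : kappa T a b r) by (split; auto; left; lra).
      destruct (HD r Kr) as [f [Hf Hf0]].
      assert (Hsig : sigma (tsI T a b) r = s0).
      { apply sig_eq; auto. intros s Ss Hrs.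
        destruct (Rle_or_lt s0 s); auto. assert (L s) by (split; auto).
        specialize (Q1 s H1). lra. }
      pose proof (dd_exact _ _ _ _ Sr Hf) as E. rewrite Hsig in E.
      destruct As0 as [_ Hx].
      assert (0 <= f * (s0 - r)) by nra.
      nra.
    + assert (r = s0) by lra. subst r.
      assert (Ks0 : kappa T a b s0).
      { split; auto. destruct (Rlt_or_le s0 b) as [Hl|Hl]; [left; auto|right].
        assert (s0 = b) by (destruct Ss0; lra). subst s0.
        unfold rho. unfold L in Hr. rewrite Hr. reflexivity. }
      destruct (HD s0 Ks0) as [f [Hf Hf0]].
      destruct As0 as [_ Hx].
      destruct (dd_cont _ _ _ _ Ss0 Hf (H a - eps * (s0 - a) - H s0)) as [d [Hd Hc]]; [lra|].
      destruct (Q2 d Hd) as [u [Lu Hu]].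
      assert (nAu : ~ A u) by (intros Au; specialize (P1 u Au); destruct Lu; lra).
      assert (Hu1 : H a - eps * (u - a) <= H u).
      { destruct (Rle_or_lt (H a - eps * (u - a)) (H u)); auto. exfalso; apply nAu; split; auto. apply Lu. }
      destruct Lu as [Su Hus].
      specialize (Hc u Su). assert (Rabs (u - s0) < d) by (apply abs_lt_intro; lra).
      specialize (Hc H0). apply abs_lt in Hc. nra.
  -
    assert (Hs0v : H a - eps * (s0 - a) <= H s0).
    { destruct (Rle_or_lt (H a - eps * (s0 - a)) (H s0)); auto. exfalso; apply nAs0; split; auto. }
    destruct (P2 1) as [x1 [Ax1 Hx1]]; [lra|].
    assert (Hs0x1 : s0 < x1).
    { specialize (P1 x1 Ax1). destruct (Req_dec s0 x1); [subst; contradiction|lra]. }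
    assert (Ks0 : kappa T a b s0) by (split; auto; left; destruct Ax1 as [[_ ?] _]; lra).
    assert (Hsig : sigma (tsI T a b) s0 = s0).
    { pose proof (sig_ge (tsI T a b) s0).
      destruct (Rle_or_lt (sigma (tsI T a b) s0) s0); [lra|].
      destruct (P2 (sigma (tsI T a b) s0 - s0)) as [x [Ax Hx]]; [lra|].
      assert (s0 < x). { specialize (P1 x Ax). destruct (Req_dec s0 x); [subst; contradiction|lra]. }
      pose proof (sig_le (tsI T a b) s0 x (proj1 Ax) H2). lra. }
    destruct (HD s0 Ks0) as [f [Hf Hf0]].
    destruct (Hf eps Heps) as [d [Hd Hc]].
    destruct (P2 d Hd) as [x [Ax Hx]].
    assert (s0 < x). { specialize (P1 x Ax). destruct (Req_dec s0 x); [subst; contradiction|lra]. }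
    specialize (Hc x (proj1 Ax)). rewrite Hsig in Hc.
    assert (Rabs (x - s0) < d) by (apply abs_lt_intro; lra).
    specialize (Hc H1). rewrite (Rabs_left1 (s0 - x)) in Hc by lra.
    apply abs_le in Hc. destruct Ax as [_ Hxa]. nra.
Qed.

Lemma mono (T : R -> Prop) a b H : closed T -> T a -> T b -> a < b ->
  (forall t, kappa T a b t -> exists f, is_delta_deriv (tsI T a b) H t f /\ 0 <= f) ->
  H a <= H b.
Proof.
  intros HT Ta Tb Hab HD.
  destruct (Rle_or_lt (H a) (H b)) as [ok|Hlt]; auto.
  pose proof (mono_claim T a b H HT Ta Tb Hab HD ((H a - H b) / (2 * (b - a)))) as C.
  assert (0 < (H a - H b) / (2 * (b - a))) by (apply Rdiv_lt_0_compat; lra).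
  specialize (C H0 b (conj Tb (conj (Rlt_le _ _ Hab) (Rle_refl b)))).
  replace ((H a - H b) / (2 * (b - a)) * (b - a)) with ((H a - H b) / 2) in C by (field; lra).
  lra.
Qed.


Definition Qf (phi : R -> R) (u w : R) : R := RInt (fun h => phi (w + h * (u - w))) 0 1.

Section QS.
Variable phi : R -> R.
Hypothesis Hpos : forall x, 0 < phi x.
Hypothesis Hc : forall x, continuous phi x.

Lemma cont_aff u w x : continuous (fun h => phi (w + h * (u - w))) x.
Proof.
  apply (continuous_comp (fun h => w + h * (u - w)) phi).
  - apply (continuous_plus (fun _ => w) (fun h => h * (u - w))).
    + apply continuous_const.
    + apply (continuous_mult (fun h => h) (fun _ => u - w)).
      * apply continuous_id.
      * apply continuous_const.
  - apply Hc.
Qed.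

Lemma ex_aff u w a b : ex_RInt (fun h => phi (w + h * (u - w))) a b.
Proof. apply (ex_RInt_continuous (V := R_CompleteNormedModule)). intros; apply cont_aff. Qed.

Lemma ex_phi a b : ex_RInt phi a b.
Proof. apply (ex_RInt_continuous (V := R_CompleteNormedModule)). intros; apply Hc. Qed.

Lemma Q_pos u w : 0 < Qf phi u w.
Proof.
  unfold Qf. apply RInt_gt_0; [lra| |].
  - intros; apply Hpos.
  - intros; apply cont_aff.
Qed.

Lemma Q_G u w : G phi u - G phi w = Qf phi u w * (u - w).
Proof.
  unfold G, Qf.
  assert (E : RInt phi 0 u - RInt phi 0 w = RInt phi w u).
  { pose proof (RInt_Chasles phi 0 w u (ex_phi _ _) (ex_phi _ _)) as Hch.
    change (RInt phi 0 w + RInt phi w u = RInt phi 0 u) in Hch. lra. }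
  rewrite E.
  replace (RInt phi w u) with (RInt phi ((u - w) * 0 + w) ((u - w) * 1 + w))
    by (f_equal; ring).
  rewrite <- (RInt_comp_lin phi (u - w) w 0 1) by apply ex_phi.
  rewrite (RInt_ext _ (fun y => scal (u - w) (phi (w + y * (u - w))))).
  2:{ intros x _. f_equal. f_equal. ring. }
  rewrite (RInt_scal (V := R_CompleteNormedModule)) by apply ex_aff.
  change (scal (u - w) (RInt (fun x : R => phi (w + x * (u - w))) 0 1)) with ((u - w) * RInt (fun x : R => phi (w + x * (u - w))) 0 1). ring.
Qed.

Lemma G_strict w u : w < u -> G phi w < G phi u.
Proof.
  intros H. pose proof (Q_G u w). pose proof (Q_pos u w). nra.
Qed.

Lemma G_le w u : w <= u -> G phi w <= G phi u.
Proof.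
  intros [H|H]; [left; apply G_strict; auto| subst; lra].
Qed.

Lemma G_0 : G phi 0 = 0.
Proof. unfold G. rewrite RInt_point. reflexivity. Qed.

Lemma comb_abs h p q : 0 <= h <= 1 -> Rabs ((1 - h) * p + h * q) <= (1 - h) * Rabs p + h * Rabs q.
Proof.
  intros Hh. eapply Rle_trans. apply Rabs_triang.
  rewrite !Rabs_mult. rewrite (Rabs_right (1 - h)) by lra. rewrite (Rabs_right h) by lra. lra.
Qed.

Lemma Q_cont u0 w0 e : 0 < e -> exists d, 0 < d /\ forall u w,
  Rabs (u - u0) < d -> Rabs (w - w0) < d -> Rabs (Qf phi u w - Qf phi u0 w0) < e.
Proof.
  intros He.
  set (K := Rabs u0 + Rabs w0 + 1).
  assert (HU : uniform_continuity phi (fun c => - K <= c <= K)).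
  { apply Heine. apply compact_P3. intros x _. apply continuity_pt_filterlim. apply Hc. }
  assert (He2 : 0 < e / 2) by lra.
  destruct (HU (mkposreal (e / 2) He2)) as [del Hdel]. simpl in Hdel.
  exists (Rmin 1 del). split. { apply Rmin_pos; [lra| apply cond_pos]. }
  intros u w Hu Hw.
  assert (Hu1 : Rabs (u - u0) < 1) by (eapply Rlt_le_trans; [exact Hu| apply Rmin_l]).
  assert (Hw1 : Rabs (w - w0) < 1) by (eapply Rlt_le_trans; [exact Hw| apply Rmin_l]).
  assert (Hu2 : Rabs (u - u0) < del) by (eapply Rlt_le_trans; [exact Hu| apply Rmin_r]).
  assert (Hw2 : Rabs (w - w0) < del) by (eapply Rlt_le_trans; [exact Hw| apply Rmin_r]).
  unfold Qf.
  assert (Em : RInt (fun h => phi (w + h * (u - w))) 0 1 - RInt (fun h => phi (w0 + h * (u0 - w0))) 0 1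
     = RInt (fun h => phi (w + h * (u - w)) - phi (w0 + h * (u0 - w0))) 0 1).
  { symmetry. apply (RInt_minus (fun h => phi (w + h * (u - w))) (fun h => phi (w0 + h * (u0 - w0))));
    apply ex_aff. }
  rewrite Em.
  eapply Rle_lt_trans.
  apply (abs_RInt_le_const _ 0 1 (e / 2)).
  { lra. }
  { apply (ex_RInt_minus (fun h => phi (w + h * (u - w))) (fun h => phi (w0 + h * (u0 - w0))));
    apply ex_aff. }
  2: lra.
  intros h Hh.
  set (x := w + h * (u - w)). set (x0 := w0 + h * (u0 - w0)).
  assert (Ex : x - x0 = (1 - h) * (w - w0) + h * (u - u0)) by (unfold x, x0; ring).
  assert (Ex0 : x0 = (1 - h) * w0 + h * u0) by (unfold x0; ring).
  set (m := Rmax (Rabs (w - w0)) (Rabs (u - u0))).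
  assert (m1 : Rabs (w - w0) <= m) by apply Rmax_l.
  assert (m2 : Rabs (u - u0) <= m) by apply Rmax_r.
  assert (mlt1 : m < 1) by (unfold m; apply Rmax_lub_lt; auto).
  assert (mlt2 : m < del) by (unfold m; apply Rmax_lub_lt; auto).
  assert (Hxx : Rabs (x - x0) <= m).
  { rewrite Ex. eapply Rle_trans. apply comb_abs; auto. nra. }
  assert (Hx0 : Rabs x0 <= Rabs u0 + Rabs w0).
  { rewrite Ex0. eapply Rle_trans. apply comb_abs; auto.
    pose proof (Rabs_pos u0). pose proof (Rabs_pos w0). nra. }
  assert (Hx : Rabs x <= K).
  { replace x with (x0 + (x - x0)) by ring. eapply Rle_trans. apply Rabs_triang. unfold K. lra. }
  apply Rlt_le. apply Hdel.
  - apply abs_le. exact Hx.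
  - apply abs_le. unfold K in *. lra.
  - lra.
Qed.

Lemma Qinv_cont u0 w0 e : 0 < e -> exists d, 0 < d /\ forall u w,
  Rabs (u - u0) < d -> Rabs (w - w0) < d -> Rabs (/ Qf phi u w - / Qf phi u0 w0) < e.
Proof.
  intros He.
  set (q0 := Qf phi u0 w0). assert (Hq0 : 0 < q0) by apply Q_pos.
  destruct (Q_cont u0 w0 (Rmin (q0 / 2) (e * q0 * q0 / 2))) as [d [Hd Hq]].
  { apply Rmin_pos; [lra|]. apply Rdiv_lt_0_compat; [|lra]. repeat apply Rmult_lt_0_compat; auto. }
  exists d. split; auto. intros u w Hu Hw.
  specialize (Hq u w Hu Hw). fold q0 in Hq.
  set (q := Qf phi u w) in *.
  assert (Hqa : Rabs (q - q0) < q0 / 2) by (eapply Rlt_le_trans; [exact Hq| apply Rmin_l]).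
  assert (Hqb : Rabs (q - q0) < e * q0 * q0 / 2) by (eapply Rlt_le_trans; [exact Hq| apply Rmin_r]).
  apply abs_lt in Hqa. apply abs_lt in Hqb.
  assert (Hq1 : q0 / 2 < q) by lra.
  replace (/ q - / q0) with ((q0 - q) / (q * q0)) by (field; lra).
  assert (0 < q * q0) by nra.
  rewrite Rabs_div by lra. rewrite (Rabs_right (q * q0)) by lra.
  apply Rmult_lt_reg_r with (q * q0); auto.
  unfold Rdiv. rewrite Rmult_assoc, Rinv_l by lra. rewrite Rmult_1_r.
  rewrite Rabs_minus_sym. apply abs_lt_intro; nra.
Qed.

Lemma G_cont : continuity (G phi).
Proof.
  intros x0 eps Heps.
  destruct (Q_cont x0 x0 1) as [d [Hd Hq]]; [lra|].
  set (q0 := Qf phi x0 x0).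
  assert (0 < q0) by apply Q_pos.
  exists (Rmin d (eps / (q0 + 1))). split.
  { apply Rmin_pos; auto. apply Rdiv_lt_0_compat; lra. }
  intros x [_ Hx]. simpl in Hx. unfold R_dist in *. simpl. unfold R_dist.
  rewrite Q_G.
  assert (Hx1 : Rabs (x - x0) < d) by (eapply Rlt_le_trans; [exact Hx| apply Rmin_l]).
  assert (Hx2 : Rabs (x - x0) < eps / (q0 + 1)) by (eapply Rlt_le_trans; [exact Hx| apply Rmin_r]).
  specialize (Hq x x0 Hx1). rewrite Rminus_diag, Rabs_R0 in Hq. specialize (Hq Hd).
  fold q0 in Hq. apply abs_lt in Hq.
  pose proof (Q_pos x x0).
  rewrite Rabs_mult, (Rabs_right (Qf phi x x0)) by lra.
  pose proof (Rabs_pos (x - x0)).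
  apply Rle_lt_trans with ((q0 + 1) * Rabs (x - x0)). nra.
  apply Rmult_lt_reg_r with (/ (q0 + 1)). apply Rinv_0_lt_compat; lra.
  replace ((q0 + 1) * Rabs (x - x0) * / (q0 + 1)) with (Rabs (x - x0)) by (field; lra).
  exact Hx2.
Qed.

Lemma Ginv_spec Bv x : 0 < Bv -> 0 <= x <= G phi Bv ->
  0 <= Ginv phi x <= Bv /\ G phi (Ginv phi x) = x.
Proof.
  intros HB Hx.
  assert (Hex : exists y, 0 <= y /\ G phi y = x).
  { destruct (IVT_gen (G phi) 0 Bv x G_cont) as [y [Hy1 Hy2]].
    { rewrite G_0. pose proof (G_strict 0 Bv HB). rewrite G_0 in H.
      rewrite Rmin_left, Rmax_right by lra. lra. }
    exists y. rewrite Rmin_left in Hy1 by lra. split; [lra|auto]. }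
  pose proof (epsilon_spec (inhabits 0) (fun y => 0 <= y /\ G phi y = x) Hex) as [H1 H2].
  fold (Ginv phi x) in H1, H2.
  repeat split; auto.
  destruct (Rle_or_lt (Ginv phi x) Bv); auto.
  pose proof (G_strict _ _ H). lra.
Qed.

Lemma Ginv_G y : 0 <= y -> Ginv phi (G phi y) = y.
Proof.
  intros Hy.
  assert (Hex : exists z, 0 <= z /\ G phi z = G phi y) by (exists y; auto).
  pose proof (epsilon_spec (inhabits 0) (fun z => 0 <= z /\ G phi z = G phi y) Hex) as [H1 H2].
  fold (Ginv phi (G phi y)) in H1, H2.
  set (g := Ginv phi (G phi y)) in *.
  destruct (Rtotal_order g y) as [Hl|[He|Hl]]; auto.
  - pose proof (G_strict _ _ Hl). lra.
  - pose proof (G_strict _ _ Hl). lra.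
Qed.

End QS.


Lemma pow_der al z : 0 < z -> is_derive (fun z => Rpower z al - al * z) z (al * Rpower z (al - 1) - al).
Proof.
  intros Hz. apply is_derive_Reals.
  replace (al * Rpower z (al - 1) - al) with (al * Rpower z (al - 1) - al * 1) by ring.
  change (derivable_pt_lim (minus_fct (fun z => Rpower z al) (mult_real_fct al id)) z
    (al * Rpower z (al - 1) - al * 1)).
  apply derivable_pt_lim_minus.
  - apply derivable_pt_lim_power; auto.
  - apply derivable_pt_lim_scal. apply derivable_pt_lim_id.
Qed.

Lemma Rpower_1l al : Rpower 1 al = 1.
Proof. unfold Rpower. rewrite ln_1, Rmult_0_r, exp_0. reflexivity. Qed.

Lemma bern_mvt al x : 0 < x -> exists c, 0 < c /\ (1 <= x -> 1 <= c) /\ (x <= 1 -> c <= 1) /\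
  Rpower x al - 1 - al * (x - 1) = al * (exp ((al - 1) * ln c) - 1) * (x - 1).
Proof.
  intros Hx.
  assert (Hm : 0 < Rmin 1 x) by (apply Rmin_pos; lra).
  destruct (MVT_gen (fun z => Rpower z al - al * z) 1 x (fun z => al * Rpower z (al - 1) - al)) as [c [Hc E]].
  - intros z Hz. apply pow_der. lra.
  - intros z Hz. apply continuity_pt_filterlim. apply (ex_derive_continuous (K := R_AbsRing) (V := R_NormedModule) (fun z => Rpower z al - al * z)).
    eexists. apply pow_der. lra.
  - exists c. split; [lra|]. split.
    { intros H1. rewrite Rmin_left in Hc by lra. lra. }
    split.
    { intros H1. rewrite Rmax_left in Hc by lra. lra. }
    rewrite Rpower_1l in E. unfold Rpower at 2 in E. lra.
Qed.

Lemma exp_ge1 u : 0 <= u -> 1 <= exp u.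
Proof. intros; pose proof (exp_ineq1_le u); lra. Qed.
Lemma exp_le1 u : u <= 0 -> exp u <= 1.
Proof. intros [H|H]. - pose proof (exp_increasing _ _ H). rewrite exp_0 in H0; lra. - subst; rewrite exp_0; lra. Qed.
Lemma ln_ge0 c : 1 <= c -> 0 <= ln c.
Proof. intros [H|H]. - pose proof (ln_increasing 1 c ltac:(lra) H). rewrite ln_1 in H0; lra. - subst; rewrite ln_1; lra. Qed.
Lemma ln_le0 c : 0 < c -> c <= 1 -> ln c <= 0.
Proof. intros H0 [H|H]. - pose proof (ln_increasing c 1 H0 H). rewrite ln_1 in H1; lra. - subst; rewrite ln_1; lra. Qed.

Lemma bern1 al x : 0 < x -> (al < 0 \/ 1 < al) -> 1 + al * (x - 1) <= Rpower x al.
Proof.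
  intros Hx Hal. destruct (bern_mvt al x Hx) as [c [Hc [H1 [H2 E]]]].
  assert (0 <= al * (exp ((al - 1) * ln c) - 1) * (x - 1)); [|lra].
  set (u := (al - 1) * ln c) in *.
  destruct (Rle_or_lt 1 x) as [Hx1|Hx1].
  - specialize (H1 Hx1). pose proof (ln_ge0 c H1).
    assert (0 <= al * (exp u - 1)).
    { destruct Hal as [Ha|Ha].
      + assert (u <= 0) by (unfold u; nra). pose proof (exp_le1 _ H0). nra.
      + assert (0 <= u) by (unfold u; nra). pose proof (exp_ge1 _ H0). nra. }
    apply Rmult_le_pos; lra.
  - specialize (H2 (Rlt_le _ _ Hx1)). pose proof (ln_le0 c Hc H2).
    assert (al * (exp u - 1) <= 0).
    { destruct Hal as [Ha|Ha].
      + assert (0 <= u) by (unfold u; nra). pose proof (exp_ge1 _ H0). nra.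
      + assert (u <= 0) by (unfold u; nra). pose proof (exp_le1 _ H0). nra. }
    nra.
Qed.

Lemma bern2 al x : 0 < x -> 0 < al < 1 -> Rpower x al <= 1 + al * (x - 1).
Proof.
  intros Hx Hal. destruct (bern_mvt al x Hx) as [c [Hc [H1 [H2 E]]]].
  assert (al * (exp ((al - 1) * ln c) - 1) * (x - 1) <= 0); [|lra].
  set (u := (al - 1) * ln c) in *.
  destruct (Rle_or_lt 1 x) as [Hx1|Hx1].
  - specialize (H1 Hx1). pose proof (ln_ge0 c H1).
    assert (al * (exp u - 1) <= 0).
    { assert (u <= 0) by (unfold u; nra). pose proof (exp_le1 _ H0). nra. }
    nra.
  - specialize (H2 (Rlt_le _ _ Hx1)). pose proof (ln_le0 c Hc H2).
    assert (0 <= al * (exp u - 1)).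
    { assert (0 <= u) by (unfold u; nra). pose proof (exp_ge1 _ H0). nra. }
    nra.
Qed.

Lemma scale_pow al P C : 0 < P -> 0 < C ->
  Rpower P al = Rpower C al * Rpower (P / C) al /\
  Rpower C al * (1 + al * (P / C - 1)) = Rpower C al + al * Rpower C al / C * (P - C).
Proof.
  intros HP HC. split.
  - rewrite Rpower_mult_distr by (auto; apply Rdiv_lt_0_compat; auto).
    f_equal. field. lra.
  - field. lra.
Qed.

Lemma convex1 al P C : 0 < P -> 0 < C -> (al < 0 \/ 1 < al) ->
  Rpower C al + al * Rpower C al / C * (P - C) <= Rpower P al.
Proof.
  intros HP HC Hal. destruct (scale_pow al P C HP HC) as [E1 E2].
  rewrite E1, <- E2. apply Rmult_le_compat_l. unfold Rpower; left; apply exp_pos.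
  apply bern1; auto. apply Rdiv_lt_0_compat; auto.
Qed.

Lemma convex2 al P C : 0 < P -> 0 < C -> 0 < al < 1 ->
  Rpower P al <= Rpower C al + al * Rpower C al / C * (P - C).
Proof.
  intros HP HC Hal. destruct (scale_pow al P C HP HC) as [E1 E2].
  rewrite E1, <- E2. apply Rmult_le_compat_l. unfold Rpower; left; apply exp_pos.
  apply bern2; auto. apply Rdiv_lt_0_compat; auto.
Qed.

Section CR.
Variable phi : R -> R.
Hypothesis Hpos : forall x, 0 < phi x.
Hypothesis Hc : forall x, continuous phi x.

Lemma chain (S : R -> Prop) y t f : S t -> is_delta_deriv S y t f ->
  is_delta_deriv S (fun x => G phi (y x)) t (Qf phi (y (sigma S t)) (y t) * f).
Proof.
  intros St Hd eps Heps.
  set (sg := sigma S t) in *.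
  set (q0 := Qf phi (y sg) (y t)).
  assert (Hq0 : 0 < q0) by (apply Q_pos; auto).
  pose proof (Rabs_pos f) as Hf0.
  set (e2 := Rmin 1 (eps / (2 * (Rabs f + 1)))).
  assert (He2 : 0 < e2) by (apply Rmin_pos; [lra|apply Rdiv_lt_0_compat; lra]).
  assert (He2a : e2 <= 1) by apply Rmin_l.
  assert (He2b : e2 * Rabs f <= eps / 2).
  { apply Rle_trans with (eps / (2 * (Rabs f + 1)) * Rabs f). apply Rmult_le_compat_r; auto. apply Rmin_r.
    apply Rmult_le_reg_r with (2 * (Rabs f + 1)). lra.
    replace (eps / (2 * (Rabs f + 1)) * Rabs f * (2 * (Rabs f + 1))) with (eps * Rabs f) by (field; lra).
    nra. }
  destruct (Q_cont phi Hc (y sg) (y t) e2 He2) as [d1 [Hd1 Hq]].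
  set (e1 := eps / (2 * (q0 + 1))).
  assert (He1 : 0 < e1) by (apply Rdiv_lt_0_compat; lra).
  assert (He1b : (q0 + 1) * e1 = eps / 2) by (unfold e1; field; lra).
  destruct (Hd e1 He1) as [d2 [Hd2 Hs]].
  destruct (dd_cont S y t f St Hd d1 Hd1) as [d3 [Hd3 Hcont]].
  exists (Rmin d2 d3). split; [apply Rmin_pos; auto|].
  intros s Ss Hst.
  specialize (Hs s Ss (Rlt_le_trans _ _ _ Hst (Rmin_l _ _))).
  specialize (Hcont s Ss (Rlt_le_trans _ _ _ Hst (Rmin_r _ _))).
  assert (Hqs := Hq (y sg) (y s)). rewrite Rminus_diag, Rabs_R0 in Hqs.
  specialize (Hqs Hd1 Hcont).
  fold q0 in Hqs. set (qs := Qf phi (y sg) (y s)) in *.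
  assert (Hqsp : 0 < qs) by (apply Q_pos; auto).
  pose proof (Q_G phi Hc (y sg) (y s)) as QG. fold sg in Hs. fold qs in QG.
  replace (G phi (y sg) - G phi (y s) - q0 * f * (sg - s))
    with (qs * (y sg - y s - f * (sg - s)) + (qs - q0) * f * (sg - s)) by (rewrite QG; ring).
  eapply Rle_trans. apply Rabs_triang.
  rewrite !Rabs_mult. rewrite (Rabs_right qs) by lra.
  set (A := Rabs (y sg - y s - f * (sg - s))) in *.
  set (Z := Rabs (sg - s)) in *.
  pose proof (Rabs_pos (sg - s)). fold Z in H.
  pose proof (Rabs_pos (qs - q0)).
  apply abs_lt in Hqs.
  assert (qs * A <= (q0 + 1) * (e1 * Z)).
  { apply Rle_trans with ((q0 + 1) * A). apply Rmult_le_compat_r. unfold A; apply Rabs_pos. lra.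
    apply Rmult_le_compat_l; lra. }
  assert (Rabs (qs - q0) * Rabs f * Z <= e2 * Rabs f * Z).
  { apply Rmult_le_compat_r; auto. apply Rmult_le_compat_r; auto. apply Rlt_le, abs_lt_intro; lra. }
  assert (e2 * Rabs f * Z <= eps / 2 * Z) by (apply Rmult_le_compat_r; auto).
  nra.
Qed.

End CR.


Section Main.
Variables (T : R -> Prop) (a b B : R) (phi : R -> R) (C : R).
Hypotheses (HT : closed T) (Ta : T a) (Tb : T b) (Hab : a < b) (HB : 0 < B)
  (Hpos : forall x, 0 < phi x) (Hc : forall x, continuous phi x)
  (HCdef : C * (b - a) = G phi B).

Let S := tsI T a b.
Let y0 := fun t => Ginv phi (C * (t - a)).
Let yd0 := fun t => C * / Qf phi (y0 (sigma S t)) (y0 t).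

Lemma GB_pos : 0 < G phi B.
Proof. pose proof (G_strict phi Hpos Hc 0 B HB). rewrite (G_0 phi) in H. exact H. Qed.

Lemma C_pos : 0 < C.
Proof. pose proof GB_pos. rewrite <- HCdef in H. nra. Qed.

Lemma y0_spec t : a <= t <= b -> 0 <= y0 t <= B /\ G phi (y0 t) = C * (t - a).
Proof.
  intros Ht. unfold y0. apply Ginv_spec; auto.
  pose proof C_pos. rewrite <- HCdef. split; nra.
Qed.

Lemma y0_a : y0 a = 0.
Proof. unfold y0. rewrite Rminus_diag, Rmult_0_r. rewrite <- (G_0 phi) at 1. apply Ginv_G; auto; lra. Qed.

Lemma y0_b : y0 b = B.
Proof. unfold y0. rewrite HCdef. apply Ginv_G; auto; lra. Qed.

Lemma y0_cont t e : a <= t <= b -> 0 < e -> exists d, 0 < d /\ forall t', a <= t' <= b ->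
  Rabs (t' - t) < d -> Rabs (y0 t' - y0 t) < e.
Proof.
  intros Ht He. pose proof C_pos as HC0.
  set (u := y0 t).
  pose proof (G_strict phi Hpos Hc u (u + e) ltac:(lra)) as g1.
  pose proof (G_strict phi Hpos Hc (u - e) u ltac:(lra)) as g2.
  set (g := Rmin (G phi (u + e) - G phi u) (G phi u - G phi (u - e))).
  assert (Hg : 0 < g) by (apply Rmin_pos; lra).
  assert (Hg1 : g <= G phi (u + e) - G phi u) by apply Rmin_l.
  assert (Hg2 : g <= G phi u - G phi (u - e)) by apply Rmin_r.
  exists (g / C). split; [apply Rdiv_lt_0_compat; auto|].
  intros t' Ht' Hd.
  destruct (y0_spec t Ht) as [_ Gt]. destruct (y0_spec t' Ht') as [_ Gt'].
  fold u in Gt.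
  apply abs_lt in Hd.
  assert (Hgc : g / C * C = g) by (field; lra).
  assert (Hd2 : - g < C * (t' - t) < g) by (split; nra).
  apply abs_lt_intro.
  - destruct (Rlt_or_le (- e) (y0 t' - u)); auto.
    pose proof (G_le phi Hpos Hc (y0 t') (u - e) ltac:(lra)). lra.
  - destruct (Rlt_or_le (y0 t' - u) e); auto.
    pose proof (G_le phi Hpos Hc (u + e) (y0 t') ltac:(lra)). lra.
Qed.

Lemma y0_diff u t : a <= u <= b -> a <= t <= b ->
  y0 u - y0 t = C * (u - t) * / Qf phi (y0 u) (y0 t).
Proof.
  intros Hu Ht. destruct (y0_spec u Hu) as [_ Gu]. destruct (y0_spec t Ht) as [_ Gt].
  pose proof (Q_G phi Hc (y0 u) (y0 t)). pose proof (Q_pos phi Hpos Hc (y0 u) (y0 t)).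
  apply Rmult_eq_reg_r with (Qf phi (y0 u) (y0 t)); [|lra].
  rewrite Rmult_assoc, Rinv_l by lra. rewrite Rmult_1_r. lra.
Qed.

Lemma sig_range t : tsI T a b t -> t <= sigma S t <= b.
Proof.
  intros [Tt [Ht1 Ht2]]. split. apply sig_ge.
  destruct Ht2 as [Hl|He].
  - apply sig_le; auto. split; auto; lra.
  - subst t. rewrite sig_empty; [lra|]. intros s [_ [_ Hs]] Hbs. lra.
Qed.

Lemma y0_dd t : kappa T a b t -> is_delta_deriv S y0 t (yd0 t).
Proof.
  intros [St _] eps Heps. pose proof C_pos as HC0.
  pose proof (sig_range t St) as Hsr.
  set (sg := sigma S t) in *.
  destruct St as [Tt Ht].
  destruct (Qinv_cont phi Hpos Hc (y0 sg) (y0 t) (eps / C)) as [d1 [Hd1 Hq]].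
  { apply Rdiv_lt_0_compat; auto. }
  destruct (y0_cont t d1 Ht Hd1) as [d2 [Hd2 Hct]].
  exists d2. split; auto. intros s [Ts Hs] Hst.
  specialize (Hct s Hs Hst).
  specialize (Hq (y0 sg) (y0 s)). rewrite Rminus_diag, Rabs_R0 in Hq. specialize (Hq Hd1 Hct).
  unfold yd0. fold sg.
  rewrite (y0_diff sg s) by lra.
  replace (C * (sg - s) * / Qf phi (y0 sg) (y0 s) - C * / Qf phi (y0 sg) (y0 t) * (sg - s))
    with (C * ((/ Qf phi (y0 sg) (y0 s) - / Qf phi (y0 sg) (y0 t)) * (sg - s))) by ring.
  rewrite Rabs_mult, Rabs_right by lra. rewrite Rabs_mult.
  pose proof (Rabs_pos (sg - s)).
  apply Rle_trans with (C * (eps / C * Rabs (sg - s))).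
  - apply Rmult_le_compat_l; [lra|]. apply Rmult_le_compat_r; auto. lra.
  - right. field. lra.
Qed.

Lemma yd0_close t e : a <= t <= b -> 0 < e -> exists d, 0 < d /\ forall s,
  a <= s <= b -> a <= sigma S s <= b -> Rabs (s - t) < d -> Rabs (sigma S s - t) < d ->
  Rabs (yd0 s - C * / Qf phi (y0 t) (y0 t)) < e.
Proof.
  intros Ht He. pose proof C_pos as HC0.
  destruct (Qinv_cont phi Hpos Hc (y0 t) (y0 t) (e / C)) as [d1 [Hd1 Hq]].
  { apply Rdiv_lt_0_compat; auto. }
  destruct (y0_cont t d1 Ht Hd1) as [d2 [Hd2 Hct]].
  exists d2. split; auto. intros s Hs Hss H1 H2.
  specialize (Hq _ _ (Hct _ Hss H2) (Hct _ Hs H1)).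
  unfold yd0. rewrite <- Rmult_minus_distr_l, Rabs_mult, Rabs_right by lra.
  apply Rmult_lt_reg_r with (/ C). apply Rinv_0_lt_compat; auto.
  replace (C * Rabs (/ Qf phi (y0 (sigma S s)) (y0 s) - / Qf phi (y0 t) (y0 t)) * / C)
    with (Rabs (/ Qf phi (y0 (sigma S s)) (y0 s) - / Qf phi (y0 t) (y0 t))) by (field; lra).
  exact Hq.
Qed.

Lemma yd0_rd : rd_continuous S (kappa T a b) a b yd0.
Proof.
  intros t [St _]. pose proof (sig_range t St) as Hsr. destruct St as [Tt Ht]. split.
  - intros [Htb Hsig] e He.
    assert (HL : yd0 t = C * / Qf phi (y0 t) (y0 t)) by (unfold yd0; rewrite Hsig; reflexivity).
    destruct (yd0_close t e Ht He) as [d [Hd Hcl]].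
    destruct (sig_dense S t Hsig b (conj Tb (conj (Rlt_le _ _ Hab) (Rle_refl b))) Htb d Hd)
      as [p [[Tp Hp] Hpt]].
    exists (p - t). split; [lra|]. intros s [Ss _] Hst. rewrite HL.
    pose proof (sig_range s Ss) as Hss. destruct Ss as [Ts Hs].
    apply abs_lt in Hst.
    apply Hcl; auto; [lra| apply abs_lt_intro; lra|].
    destruct (Rtotal_order s t) as [Hl|[He'|Hl]].
    + pose proof (sig_le S s t (conj Tt Ht) Hl). apply abs_lt_intro; lra.
    + subst s. rewrite Hsig. rewrite Rminus_diag, Rabs_R0. auto.
    + pose proof (sig_le S s p (conj Tp Hp) ltac:(lra)). apply abs_lt_intro; lra.
  - intros [Hat Hrho]. exists (C * / Qf phi (y0 t) (y0 t)). intros e He.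
    destruct (yd0_close t e Ht He) as [d [Hd Hcl]].
    exists d. split; auto. intros s [Ss _] Hst.
    pose proof (sig_range s Ss) as Hss. destruct Ss as [Ts Hs].
    pose proof (sig_le S s t (conj Tt Ht) ltac:(lra)).
    apply Hcl; auto; [lra| apply abs_lt_intro; lra| apply abs_lt_intro; lra].
Qed.

Lemma y0_adm : admissible T a b B y0 yd0.
Proof.
  split; [|split; [|split; [|split]]].
  - exact y0_dd.
  - exact yd0_rd.
  - intros t _. unfold yd0. pose proof C_pos. pose proof (Q_pos phi Hpos Hc (y0 (sigma S t)) (y0 t)).
    apply Rmult_lt_0_compat; auto. apply Rinv_0_lt_compat; auto.
  - exact y0_a.
  - exact y0_b.
Qed.

Lemma y0_val alpha : functional_value T a b alpha phi y0 yd0 ((b - a) * Rpower C alpha).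
Proof.
  exists (fun t => Rpower C alpha * t). split.
  - intros t Kt.
    replace (integrand T a b alpha phi y0 yd0 t) with (Rpower C alpha).
    { apply dd_lin. }
    destruct Kt as [St _]. pose proof (sig_range t St) as Hsr. destruct St as [Tt Ht].
    unfold integrand. f_equal. fold S.
    unfold mu. fold S.
    assert (E : (sigma S t - t) * yd0 t = y0 (sigma S t) - y0 t).
    { unfold yd0. rewrite (y0_diff (sigma S t) t) by lra. ring. }
    rewrite (RInt_ext _ (fun h => phi (y0 t + h * (y0 (sigma S t) - y0 t)))).
    2:{ intros x _. f_equal. rewrite <- E. ring. }
    change (RInt (fun h : R => phi (y0 t + h * (y0 (sigma S t) - y0 t))) 0 1)
      with (Qf phi (y0 (sigma S t)) (y0 t)).
    unfold yd0. pose proof (Q_pos phi Hpos Hc (y0 (sigma S t)) (y0 t)). field. lra.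
  - ring.
Qed.

End Main.


Lemma ineq_gen (T : R -> Prop) (a b B : R) (phi : R -> R) (C alpha sg : R) y yd v :
  closed T -> T a -> T b -> a < b ->
  (forall x, 0 < phi x) -> (forall x, continuous phi x) ->
  C * (b - a) = G phi B ->
  (forall P, 0 < P -> 0 <= sg * (Rpower P alpha - Rpower C alpha - alpha * Rpower C alpha / C * (P - C))) ->
  admissible T a b B y yd -> functional_value T a b alpha phi y yd v ->
  0 <= sg * (v - (b - a) * Rpower C alpha).
Proof.
  intros HT Ta Tb Hab Hpos Hc HCdef Hconv [Hyd [_ [Hydp [Hya Hyb]]]] [F [HF Hv]].
  set (k := alpha * Rpower C alpha / C) in *.
  set (Ca := Rpower C alpha) in *.
  set (S := tsI T a b).
  pose proof (mono T a b (fun x => sg * (F x + ((- k) * G phi (y x) + (k * C - Ca) * x))) HT Ta Tb Hab) as Hm.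
  assert (HD : forall t, kappa T a b t -> exists f,
    is_delta_deriv (tsI T a b) (fun x => sg * (F x + ((- k) * G phi (y x) + (k * C - Ca) * x))) t f /\ 0 <= f).
  { intros t Kt.
    pose proof (Hyd t Kt) as Hy.
    pose proof (chain phi Hpos Hc S y t (yd t) (proj1 Kt) Hy) as Hch.
    set (Q := Qf phi (y (sigma S t)) (y t)) in *.
    eexists. split.
    - apply (dd_scal S (fun x => F x + ((- k) * G phi (y x) + (k * C - Ca) * x))).
      apply (dd_plus S F (fun x => (- k) * G phi (y x) + (k * C - Ca) * x)).
      + apply HF; auto.
      + apply (dd_plus S (fun x => (- k) * G phi (y x)) (fun x => (k * C - Ca) * x)).
        * apply (dd_scal S (fun x => G phi (y x))). exact Hch.
        * apply dd_lin.
    - assert (EP : RInt (fun h => phi (y t + h * mu (tsI T a b) t * yd t)) 0 1 = Q).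
      { unfold Q, Qf. apply RInt_ext. intros x _. f_equal.
        pose proof (dd_exact S y t (yd t) (proj1 Kt) Hy) as E. unfold mu. fold S. rewrite E. ring. }
      unfold integrand. rewrite EP.
      pose proof (Q_pos phi Hpos Hc (y (sigma S t)) (y t)). fold Q in H.
      pose proof (Hydp t Kt).
      specialize (Hconv (Q * yd t) ltac:(apply Rmult_lt_0_compat; auto)).
      fold Ca in Hconv. fold k in Hconv.
      replace (sg * (Rpower (Q * yd t) alpha + (- k * (Q * yd t) + (k * C - Ca))))
        with (sg * (Rpower (Q * yd t) alpha - Ca - k * (Q * yd t - C))) by ring.
      exact Hconv. }
  specialize (Hm HD). simpl in Hm.
  rewrite Hya, Hyb, (G_0 phi), <- HCdef in Hm.
  replace (sg * (v - (b - a) * Ca)) with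
    (sg * (F b + (- k * (C * (b - a)) + (k * C - Ca) * b)) - sg * (F a + (- k * 0 + (k * C - Ca) * a)))
    by (rewrite Hv; ring).
  lra.
Qed.

Theorem theorem3p1 (T : R -> Prop) (a b B alpha : R) (phi : R -> R) :
  closed T -> T a -> T b -> a < b -> 0 < B ->
  (forall x, 0 < phi x) -> (forall x, continuous phi x) ->
  alpha <> 0 -> alpha <> 1 ->
  let C := RInt phi 0 B / (b - a) in
  let y0 := fun t => Ginv phi (C * (t - a)) in
  let M := (b - a) * Rpower C alpha in
  ((alpha < 0 \/ 1 < alpha) ->
     (exists yd0, admissible T a b B y0 yd0 /\ functional_value T a b alpha phi y0 yd0 M) /\
     (forall y yd v, admissible T a b B y yd -> functional_value T a b alpha phi y yd v ->
        M <= v)) /\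
  ((0 < alpha < 1) ->
     (exists yd0, admissible T a b B y0 yd0 /\ functional_value T a b alpha phi y0 yd0 M) /\
     (forall y yd v, admissible T a b B y yd -> functional_value T a b alpha phi y yd v ->
        v <= M)).
Proof.
  intros HT Ta Tb Hab HB Hpos Hc Ha0 Ha1 C y0 M.
  assert (HCdef : C * (b - a) = G phi B) by (unfold C, G; field; lra).
  assert (HC0 : 0 < C) by (exact (C_pos a b B phi C Hab HB Hpos Hc HCdef)).
  assert (Hex : exists yd0, admissible T a b B y0 yd0 /\ functional_value T a b alpha phi y0 yd0 M).
  { exists (fun t => C * / Qf phi (y0 (sigma (tsI T a b) t)) (y0 t)). split.
    - exact (y0_adm T a b B phi C Tb Hab HB Hpos Hc HCdef).
    - exact (y0_val T a b B phi C Tb Hab HB Hpos Hc HCdef alpha). }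
  split; intros Hal; split; auto.
  - intros y yd v Hadm Hfv.
    pose proof (ineq_gen T a b B phi C alpha 1 y yd v HT Ta Tb Hab Hpos Hc HCdef) as HI.
    assert (0 <= 1 * (v - (b - a) * Rpower C alpha)); [|unfold M; lra].
    apply HI; auto. intros P HP. pose proof (convex1 alpha P C HP HC0 Hal). lra.
  - intros y yd v Hadm Hfv.
    pose proof (ineq_gen T a b B phi C alpha (-1) y yd v HT Ta Tb Hab Hpos Hc HCdef) as HI.
    assert (0 <= -1 * (v - (b - a) * Rpower C alpha)); [|unfold M; lra].
    apply HI; auto. intros P HP. pose proof (convex2 alpha P C HP HC0 Hal). lra.
Qed.
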